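(* For any frame $L$, $\overline{\mathrm{H}}(L)$ is order-isomorphic to $\overline{\mathrm{C}}(\mathfrak{B}(L))$.
   Context: $\mathbb{Q}$ is the rationals; $a^\ast$ is the pseudocomplement. $\mathfrak{B}(L)=\{a\in L\mid a=a^{\ast\ast}\}$ is the Booleanization of $L$, a complete Boolean algebra (a frame). The frame $\mathfrak{L}(\overline{\mathbb{IR}})$ is presented by generators $(r,\textsf{---})$, $(\textsf{---},s)$ ($r,s\in\mathbb{Q}$) subject to (r1) $(r,\textsf{---})\wedge(\textsf{---},s)=0$ whenever $r\ge s$; (r3) $(r,\textsf{---})=\bigvee_{s>r}(s,\textsf{---})$; (r4) $(\textsf{---},s)=\bigvee_{r<s}(\textsf{---},r)$. For a frame $M$, $\overline{\mathrm{IC}}(M)$ is the set of frame homomorphisms $\mathfrak{L}(\overline{\mathbb{IR}})\to M$, ordered by $f\le g$ iff $f(r,\textsf{---})\le g(r,\textsf{---})$ and $g(\textsf{---},s)\le f(\textsf{---},s)$ for all $r,s$; $\overline{\mathrm{C}}(M)$ is the subposet of those $f$ with $f(r,\textsf{---})\vee f(\textsf{---},s)=1$ whenever $r<s$; $\overline{\mathrm{H}}(M)$ is the subposet of those $f$ with $f(r,\textsf{---})^\ast\le f(\textsf{---},s)$ and $f(\textsf{---},s)^\ast\le f(r,\textsf{---})$ whenever $r<s$. *)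

(* Defs.v *)
From mathcomp Require Import all_boot all_order all_algebra.
Set Implicit Arguments. Unset Strict Implicit. Unset Printing Implicit Defensive.
Import Order.TTheory GRing.Theory Num.Theory.
Local Open Scope ring_scope.

Record FrameOps := {
  fcar :> Type;
  fle : fcar -> fcar -> Prop;
  fsup : (fcar -> Prop) -> fcar;
  fmeet : fcar -> fcar -> fcar }.
Arguments fle {f}. Arguments fsup {f}. Arguments fmeet {f}.

Definition is_frame (L : FrameOps) : Prop :=
  (forall a : L, fle a a) /\
  (forall a b : L, fle a b -> fle b a -> a = b) /\
  (forall a b c : L, fle a b -> fle b c -> fle a c) /\
  (forall (S : L -> Prop) a, S a -> fle a (fsup S)) /\
  (forall (S : L -> Prop) b, (forall a, S a -> fle a b) -> fle (fsup S) b) /\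
  (forall a b : L, fle (fmeet a b) a /\ fle (fmeet a b) b) /\
  (forall a b c : L, fle c a -> fle c b -> fle c (fmeet a b)) /\
  (forall (a : L) (S : L -> Prop),
      fmeet a (fsup S) = fsup (fun y => exists2 s, S s & y = fmeet a s)).

Record Frame := { fops :> FrameOps; fframe : is_frame fops }.

Section Derived.
Variable L : FrameOps.
Definition ftop : L := fsup (fun _ => True).
Definition fbot : L := fsup (fun _ => False).
Definition fjoin (a b : L) : L := fsup (fun x => x = a \/ x = b).
Definition pc (a : L) : L := fsup (fun x => fmeet a x = fbot).
End Derived.
Arguments ftop {L}. Arguments fbot {L}.

Section Facts.
Variable L : Frame.
Let H := fframe L.
Lemma f_refl (a : L) : fle a a. Proof. by case: H => h _; apply: h. Qed.
Lemma f_anti (a b : L) : fle a b -> fle b a -> a = b. Proof. by case: H => _ [h _]; apply: h. Qed.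
Lemma f_trans (a b c : L) : fle a b -> fle b c -> fle a c.
Proof. by case: H => _ [_ [h _]]; apply: h. Qed.
Lemma f_ub (S : L -> Prop) a : S a -> fle a (fsup S).
Proof. by case: H => _ [_ [_ [h _]]]; apply: h. Qed.
Lemma f_lub (S : L -> Prop) b : (forall a, S a -> fle a b) -> fle (fsup S) b.
Proof. by case: H => _ [_ [_ [_ [h _]]]]; apply: h. Qed.
Lemma f_meetl (a b : L) : fle (fmeet a b) a. Proof. by case: H => _ [_ [_ [_ [_ [h _]]]]]; case: (h a b). Qed.
Lemma f_meetr (a b : L) : fle (fmeet a b) b. Proof. by case: H => _ [_ [_ [_ [_ [h _]]]]]; case: (h a b). Qed.
Lemma f_glb (a b c : L) : fle c a -> fle c b -> fle c (fmeet a b).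
Proof. by case: H => _ [_ [_ [_ [_ [_ [h _]]]]]]; apply: h. Qed.
Lemma f_distr (a : L) (S : L -> Prop) :
  fmeet a (fsup S) = fsup (fun y => exists2 s, S s & y = fmeet a s).
Proof. by case: H => _ [_ [_ [_ [_ [_ [_ h]]]]]]. Qed.

Lemma f_bot_le (a : L) : fle fbot a. Proof. by apply: f_lub. Qed.
Lemma f_meetC (a b : L) : fmeet a b = fmeet b a.
Proof. by apply: f_anti; apply: f_glb; [apply: f_meetr|apply: f_meetl|apply: f_meetr|apply: f_meetl]. Qed.

Lemma f_meet_pc (a : L) : fmeet a (pc a) = fbot.
Proof.
rewrite /pc f_distr; apply: f_anti; last exact: f_bot_le.
by apply: f_lub => y [s hs ->]; rewrite hs; apply: f_refl.
Qed.
Lemma f_pc_le (a x : L) : fmeet a x = fbot -> fle x (pc a). Proof. exact: f_ub. Qed.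
Lemma f_le_pcpc (a : L) : fle a (pc (pc a)).
Proof. by apply: f_pc_le; rewrite f_meetC f_meet_pc. Qed.
Lemma f_pc_anti (a b : L) : fle a b -> fle (pc b) (pc a).
Proof.
move=> hab; apply: f_lub => x hx; apply: f_pc_le; apply: f_anti; last exact: f_bot_le.
rewrite -hx; apply: f_glb; last exact: f_meetr.
exact: f_trans (f_meetl _ _) hab.
Qed.
Lemma f_pc3 (a : L) : pc (pc (pc a)) = pc a.
Proof. by apply: f_anti; [apply: f_pc_anti; apply: f_le_pcpc | apply: f_le_pcpc]. Qed.
Lemma f_meet_reg (a b : L) : a = pc (pc a) -> b = pc (pc b) ->
  fmeet a b = pc (pc (fmeet a b)).
Proof.
move=> ha hb; apply: f_anti; first exact: f_le_pcpc.
apply: f_glb.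
  by rewrite {2}ha; do 2 apply: f_pc_anti; apply: f_meetl.
by rewrite {2}hb; do 2 apply: f_pc_anti; apply: f_meetr.
Qed.
End Facts.

Section Booleanization.
Variable L : Frame.
Definition BCar := {a : L | a = pc (pc a)}.
Definition Bsup (S : BCar -> Prop) : BCar :=
  let X := fsup (fun x => exists2 b : BCar, S b & x = sval b) in
  exist _ (pc (pc X)) (esym (f_pc3 (pc X))).
Definition Bmeet (a b : BCar) : BCar :=
  exist _ (fmeet (sval a) (sval b)) (f_meet_reg (svalP a) (svalP b)).
Definition Booleanization : FrameOps :=
  {| fcar := BCar; fle := fun a b => fle (sval a) (sval b);
     fsup := Bsup; fmeet := Bmeet |}.
End Booleanization.

(* Frame homomorphisms L(IR-bar) -> M.  By the universal property of  *)
(* the presentation, such a homomorphism f is the same as the pair of *)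
(* generator images  lo r = f(r,---),  up s = f(---,s)  satisfying    *)
(* (r1), (r3), (r4) in M.                                             *)
Record GenMap (M : FrameOps) := { lo : rat -> M; up : rat -> M }.

Definition is_IC (M : FrameOps) (f : GenMap M) : Prop :=
  [/\ (forall r s : rat, s <= r -> fmeet (lo f r) (up f s) = fbot),
      (forall r : rat, lo f r = fsup (fun x => exists2 s : rat, r < s & x = lo f s)) &
      (forall s : rat, up f s = fsup (fun x => exists2 r : rat, r < s & x = up f r))].

Definition is_C (M : FrameOps) (f : GenMap M) : Prop :=
  is_IC f /\ (forall r s : rat, r < s -> fjoin (lo f r) (up f s) = ftop).

Definition is_H (M : FrameOps) (f : GenMap M) : Prop :=
  is_IC f /\ (forall r s : rat, r < s ->
     fle (pc (lo f r)) (up f s) /\ fle (pc (up f s)) (lo f r)).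

Definition ic_le (M : FrameOps) (f g : GenMap M) : Prop :=
  (forall r : rat, fle (lo f r) (lo g r)) /\ (forall s : rat, fle (up g s) (up f s)).

Definition ICbar (M : FrameOps) := {f : GenMap M | is_IC f}.
Definition Cbar (M : FrameOps) := {f : GenMap M | is_C f}.
Definition Hbar (M : FrameOps) := {f : GenMap M | is_H f}.

Definition Cbar_le (M : FrameOps) (f g : Cbar M) := ic_le (sval f) (sval g).
Definition Hbar_le (M : FrameOps) (f g : Hbar M) := ic_le (sval f) (sval g).

Definition order_iso (A B : Type) (leA : A -> A -> Prop) (leB : B -> B -> Prop) : Prop :=
  exists (f : A -> B) (g : B -> A),
    [/\ cancel f g, cancel g f & forall x y, leA x y <-> leB (f x) (f y)].

(* Main.v *)
Require Import Defs.
From mathcomp Require Import all_boot all_order all_algebra.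
From Stdlib Require Import ProofIrrelevance FunctionalExtensionality.
Set Implicit Arguments. Unset Strict Implicit. Unset Printing Implicit Defensive.
Import Order.TTheory GRing.Theory Num.Theory.
Local Open Scope ring_scope.

Section S.
Variable L : Frame.
Implicit Types a b c : L.

Lemma le_bot a : fle a fbot -> a = fbot.
Proof. move=> h; apply: f_anti h (f_bot_le _). Qed.
Lemma top_ge a : fle a ftop.
Proof. exact: (@f_ub L (fun _ => True)). Qed.
Lemma meet_top a : fmeet ftop a = a.
Proof. apply: f_anti; [exact: f_meetr | apply: f_glb; [exact: top_ge|exact: f_refl]]. Qed.
Lemma pc_bot : pc (fbot : L) = ftop.
Proof. apply: f_anti; first exact: top_ge. apply: f_pc_le; apply: le_bot; exact: f_meetl. Qed.
Lemma pc_top : pc (ftop : L) = fbot.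
Proof. have := f_meet_pc (ftop : L); by rewrite meet_top. Qed.
Lemma meet0_le a b : fmeet a b = fbot -> fle a (pc b).
Proof. by move=> h; apply: f_pc_le; rewrite f_meetC. Qed.
Lemma le_pc_meet0 a b : fle a (pc b) -> fmeet a b = fbot.
Proof.
move=> h; apply: le_bot; apply: (@f_trans _ _ (fmeet (pc b) b)).
  apply: f_glb; [exact: f_trans (f_meetl _ _) h | exact: f_meetr].
by rewrite f_meetC f_meet_pc; apply: f_refl.
Qed.
Lemma pc_reg_le a b : fle a (pc b) -> fle (pc (pc a)) (pc b).
Proof. by move=> h; rewrite -(f_pc3 b); do 2 apply: f_pc_anti. Qed.
Lemma pp_mono a b : fle a b -> fle (pc (pc a)) (pc (pc b)).
Proof. by move=> h; do 2 apply: f_pc_anti. Qed.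
Lemma join_l a b : fle a (fjoin a b). Proof. by apply: f_ub; left. Qed.
Lemma join_r a b : fle b (fjoin a b). Proof. by apply: f_ub; right. Qed.
Lemma join_lub a b c : fle a c -> fle b c -> fle (fjoin a b) c.
Proof. by move=> ha hb; apply: f_lub => z [->|->]. Qed.
Lemma join_mono a b c d : fle a c -> fle b d -> fle (fjoin a b) (fjoin c d).
Proof.
move=> h1 h2; apply: join_lub; [exact: f_trans h1 (join_l _ _)|exact: f_trans h2 (join_r _ _)].
Qed.
Lemma pc_join a b : pc (fjoin a b) = fmeet (pc a) (pc b).
Proof.
apply: f_anti.
  by apply: f_glb; apply: f_pc_anti; [apply: join_l|apply: join_r].
apply: meet0_le; apply: le_bot; rewrite /fjoin f_distr; apply: f_lub => y [s [->|->] ->].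
  apply: (@f_trans _ _ (fmeet (pc a) a)).
    apply: f_glb; [exact: f_trans (f_meetl _ _) (f_meetl _ _)|exact: f_meetr].
  by rewrite f_meetC f_meet_pc; apply: f_refl.
apply: (@f_trans _ _ (fmeet (pc b) b)).
  apply: f_glb; [exact: f_trans (f_meetl _ _) (f_meetr _ _)|exact: f_meetr].
by rewrite f_meetC f_meet_pc; apply: f_refl.
Qed.
Lemma pcpc_join_pc a : pc (pc (fjoin a (pc a))) = ftop.
Proof. by rewrite pc_join f_meet_pc pc_bot. Qed.
Lemma sup_le (S T : L -> Prop) :
  (forall z, S z -> exists2 w, T w & fle z w) -> fle (fsup S) (fsup T).
Proof. move=> h; apply: f_lub => z /h [w tw hw]; exact: f_trans hw (f_ub tw). Qed.
Lemma meet_sups (S T : L -> Prop) :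
  (forall x y, S x -> T y -> fmeet x y = fbot) -> fmeet (fsup S) (fsup T) = fbot.
Proof.
move=> h; apply: le_bot; rewrite f_distr; apply: f_lub => y [t ht ->].
rewrite f_meetC f_distr; apply: f_lub => z [s hs ->].
by rewrite f_meetC (h _ _ hs ht); apply: f_refl.
Qed.
Lemma C_pc a b : pc (pc (fjoin a b)) = ftop -> b = pc (pc b) -> fle (pc a) b.
Proof.
move=> h hb; rewrite hb; apply: meet0_le.
by rewrite -pc_join -f_pc3 h pc_top.
Qed.
Lemma C_pc' a b : pc (pc (fjoin a b)) = ftop -> a = pc (pc a) -> fle (pc b) a.
Proof.
move=> h ha; rewrite ha; apply: meet0_le.
by rewrite f_meetC -pc_join -f_pc3 h pc_top.
Qed.

Notation B := (Booleanization L).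
Definition toB (a : L) : B := exist _ (pc (pc a)) (esym (f_pc3 (pc a))).

Lemma Beq (x y : B) : sval x = sval y -> x = y.
Proof.
case: x => x hx; case: y => y hy /= e; subst y; f_equal; apply: proof_irrelevance.
Qed.
Lemma Bbot : sval (@fbot B) = fbot.
Proof.
rewrite /fbot /=.
have -> : fsup (fun x : L => exists2 b : BCar L, False & x = sval b) = fbot.
  by apply: f_anti; [apply: f_lub => a [b []] | apply: f_bot_le].
by rewrite pc_bot pc_top.
Qed.
Lemma Btop : sval (@ftop B) = ftop.
Proof.
apply: f_anti; first exact: top_ge.
rewrite /ftop /=.
have reg : (ftop : L) = pc (pc ftop) by rewrite pc_top pc_bot.
apply: f_trans (f_le_pcpc _); apply: f_ub; by exists (exist _ ftop reg).
Qed.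
Lemma Bjoin (x y : B) : sval (fjoin x y) = pc (pc (fjoin (sval x) (sval y))).
Proof.
rewrite /fjoin /=; congr (pc (pc _)); apply: f_anti; apply: sup_le.
  by move=> z [b [->|->] ->]; [exists (sval x); [left|apply: f_refl]|exists (sval y); [right|apply: f_refl]].
by move=> z [->|->]; [exists (sval x); [exists x; [left|]|apply: f_refl]|exists (sval y); [exists y; [right|]|apply: f_refl]].
Qed.

Lemma toB_sup (R : rat -> rat -> Prop) (a : rat -> L) x :
  a x = fsup (fun z => exists2 y, R x y & z = a y) ->
  toB (a x) = fsup (fun b : B => exists2 y, R x y & b = toB (a y)).
Proof.
move=> e; apply: Beq => /=.
set X := fsup _.
have h1 : fle (a x) X.
  rewrite e; apply: sup_le => z [y ry ->]; exists (pc (pc (a y))); last exact: f_le_pcpc.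
  by exists (toB (a y)) => //; exists y.
have h2 : fle X (pc (pc (a x))).
  apply: f_lub => z [b [y ry ->] ->] /=; apply: pp_mono.
  by rewrite e; apply: f_ub; exists y.
apply: f_anti; first exact: pp_mono.
by rewrite -(f_pc3 (pc (a x))); apply: pp_mono.
Qed.

Lemma meet0_pp a b : fmeet a b = fbot -> fmeet (pc (pc a)) (pc (pc b)) = fbot.
Proof.
move=> h; apply: le_pc_meet0; rewrite f_pc3; apply: pc_reg_le; exact: meet0_le.
Qed.

Lemma recon (R : rat -> rat -> Prop) (a b : rat -> L) x :
  a x = fsup (fun z => exists2 y, R x y & z = a y) ->
  (forall y, fmeet (a y) (b y) = fbot) ->
  (forall y, R x y -> fle (pc (b y)) (a x)) ->
  fsup (fun z => exists2 y, R x y & z = pc (pc (a y))) = a x.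
Proof.
move=> e hm hpc; apply: f_anti.
  apply: f_lub => z [y ry ->]; apply: f_trans (hpc _ ry).
  apply: pc_reg_le; exact: meet0_le.
rewrite {1}e; apply: sup_le => z [y ry ->]; exists (pc (pc (a y))); last exact: f_le_pcpc.
by exists y.
Qed.

Definition liftL (R : rat -> rat -> Prop) (a : rat -> B) x : L :=
  fsup (fun z => exists2 y, R x y & z = sval (a y)).

Lemma liftL_sup (R : rat -> rat -> Prop) (a : rat -> B) x :
  (forall x y z, R x y -> R y z -> R x z) ->
  (forall x z, R x z -> exists y, R x y /\ R y z) ->
  liftL R a x = fsup (fun z => exists2 y, R x y & z = liftL R a y).
Proof.
move=> tr de; apply: f_anti.
  apply: f_lub => z [t rt ->]; have [s [rs st]] := de _ _ rt.
  apply: f_trans (f_ub (S := fun z => exists2 y, R x y & z = liftL R a y) _); last by exists s.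
  by apply: f_ub; exists t.
apply: f_lub => z [s rs ->]; apply: f_lub => w [t st ->]; apply: f_ub; exists t => //.
exact: tr rs st.
Qed.

Lemma liftB (R : rat -> rat -> Prop) (a : rat -> B) x :
  a x = fsup (fun b : B => exists2 y, R x y & b = a y) ->
  toB (liftL R a x) = a x.
Proof.
move=> e; apply: Beq; rewrite [in RHS]e /=; congr (pc (pc _)).
apply: f_anti; apply: sup_le.
  by move=> z [y ry ->]; exists (sval (a y)); [exists (a y) => //; exists y|apply: f_refl].
by move=> z [b [y ry ->] ->]; exists (sval (a y)); [exists y|apply: f_refl].
Qed.

Lemma ltr_tr (x y z : rat) : x < y -> y < z -> x < z.
Proof. exact: lt_trans. Qed.
Lemma ltr_de (x z : rat) : x < z -> exists y, x < y /\ y < z.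
Proof. move=> h; exists ((x + z) / 2); have := midf_lt h; by case. Qed.

Definition phi_map (h : GenMap L) : GenMap B :=
  {| lo := fun r => toB (lo h r); up := fun s => toB (up h s) |}.
Definition psi_map (g : GenMap B) : GenMap L :=
  {| lo := liftL (fun r s => r < s) (lo g); up := liftL (fun s r => r < s) (up g) |}.

Lemma phi_C (h : GenMap L) : is_H h -> is_C (phi_map h).
Proof.
case=> [[r1 r3 r4] hH]; split; first split.
- move=> r s sr; apply: Beq; rewrite Bbot /=; apply: meet0_pp; exact: r1.
- move=> r /=; exact: (toB_sup (R := fun r s => r < s)).
- move=> s /=; exact: (toB_sup (R := fun s r => r < s)).
- move=> r s rs; apply: Beq; rewrite Bjoin Btop /=.
  apply: f_anti; first exact: top_ge.
  rewrite -(pcpc_join_pc (lo h r)); apply: pp_mono; apply: join_mono.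
    exact: f_le_pcpc.
  apply: f_trans (f_le_pcpc _); exact: (proj1 (hH _ _ rs)).
Qed.

Lemma psi_H (g : GenMap B) : is_C g -> is_H (psi_map g).
Proof.
case=> [[r1 r3 r4] hC]; split; first split.
- move=> r s sr /=; apply: meet_sups => x y [a ra ->] [b bs ->].
  have ba : b <= a by apply: ltW; exact: lt_trans bs (le_lt_trans sr ra).
  by have := f_equal sval (r1 _ _ ba); rewrite Bbot.
- move=> r /=; apply: liftL_sup; [exact: ltr_tr|exact: ltr_de].
- move=> s /=; apply: liftL_sup.
    by move=> x y z h1 h2; exact: ltr_tr h2 h1.
  by move=> x z h; have [y [h1 h2]] := ltr_de h; exists y.
- move=> r s rs /=.
  have [t [rt ts]] := ltr_de rs; have [u [tu us]] := ltr_de ts.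
  have j : pc (pc (fjoin (sval (lo g t)) (sval (up g u)))) = ftop.
    by rewrite -Bjoin (hC _ _ tu) Btop.
  have hl : fle (sval (lo g t)) (liftL (fun r s => r < s) (lo g) r) by apply: f_ub; exists t.
  have hu : fle (sval (up g u)) (liftL (fun s r => r < s) (up g) s) by apply: f_ub; exists u.
  split.
    apply: f_trans (f_pc_anti hl) _; apply: f_trans _ hu; exact: (C_pc j (svalP (up g u))).
  apply: f_trans (f_pc_anti hu) _; apply: f_trans _ hl; exact: (C_pc' j (svalP (lo g t))).
Qed.

Definition phi (h : Hbar L) : Cbar B := exist _ (phi_map (sval h)) (phi_C (svalP h)).
Definition psi (g : Cbar B) : Hbar L := exist _ (psi_map (sval g)) (psi_H (svalP g)).

Lemma genmap_eq (M : FrameOps) (f g : GenMap M) :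
  (forall r, lo f r = lo g r) -> (forall r, up f r = up g r) -> f = g.
Proof.
case: f => lf uf; case: g => lg ug /= h1 h2.
by rewrite (functional_extensionality _ _ h1) (functional_extensionality _ _ h2).
Qed.

Lemma phiK : cancel phi psi.
Proof.
case=> h hh; apply: eq_sig_hprop; first by move=> ? ? ?; apply: proof_irrelevance.
rewrite /=; move: (hh) => [[r1 r3 r4] hH].
apply: genmap_eq => r /=.
- apply: (recon (b := up h)) => //.
    by move=> y; apply: r1; apply: le_refl.
  by move=> s rs; exact: proj2 (hH _ _ rs).
- apply: (recon (R := fun s r => r < s) (b := lo h)) => //.
    by move=> y; rewrite f_meetC; apply: r1; apply: le_refl.
  by move=> s rs; exact: proj1 (hH _ _ rs).
Qed.

Lemma psiK : cancel psi phi.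
Proof.
case=> g hg; apply: eq_sig_hprop; first by move=> ? ? ?; apply: proof_irrelevance.
rewrite /=; move: (hg) => [[r1 r3 r4] hC].
apply: genmap_eq => r /=.
- exact: (liftB (R := fun r s => r < s)).
- exact: (liftB (R := fun s r => r < s)).
Qed.

Lemma phi_mono x y : Hbar_le x y -> Cbar_le (phi x) (phi y).
Proof. by case=> h1 h2; split => r /=; apply: pp_mono. Qed.
Lemma psi_mono x y : Cbar_le x y -> Hbar_le (psi x) (psi y).
Proof.
case=> h1 h2; split => r /=; apply: sup_le => z [t rt ->].
  by exists (sval (lo (sval y) t)); [exists t|exact: h1].
by exists (sval (up (sval x) t)); [exists t|exact: h2].
Qed.

End S.

Theorem proposition3p9 (L : Frame) :
  order_iso (@Hbar_le L) (@Cbar_le (Booleanization L)).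
Proof.
exists (@phi L), (@psi L); split; [exact: phiK|exact: psiK|].
move=> x y; split; first exact: phi_mono.
by move=> h; rewrite -(phiK x) -(phiK y); apply: psi_mono.
Qed.
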